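(* Let $\rho$ be a state on $\mathbb{C}^M\otimes\mathbb{C}^N$, fix an orthonormal basis $\{|f_n\rangle\}$ of $\mathbb{C}^N$ and a positive integer $K$ such that $\rho$ admits a decomposition into $K$ rank-one terms. The following are equivalent: (a) $\rho$ is $K$-separable; (b) there is an orthonormal basis $\{|e_m\rangle\}$ of $\mathbb{C}^M$ such that for every decomposition $\rho=\sum_{l=1}^K|\Phi_l\rangle\langle\Phi_l|$, with Gram vectors $w''_{mn}\in\mathbb{C}^K$, $w''^{\,l}_{mn}=\langle\Phi_l|e_m\otimes f_n\rangle$, there exist $K\times K$ matrices $M_{mk}$ ($m,k=1,\dots,M$), each normal and all pairwise commuting, such that $M_{mk}w''_{kn}=w''_{mn}$ for all $m,k\in\{1,\dots,M\}$, $n\in\{1,\dots,N\}$; (c) for some orthonormal basis $\{|e_m\rangle\}$ of $\mathbb{C}^M$ and some decomposition $\rho=\sum_{l=1}^K|\Phi_l\rangle\langle\Phi_l|$, there exist pairwise commuting normal $K\times K$ matrices $M_{mk}$ with $M_{mk}w''_{kn}=w''_{mn}$ for all $m,k,n$, where $w''_{mn}$ are defined as in (b).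
   Context: A state $\rho$ is $K$-separable if $\rho=\sum_{l=1}^K|\varphi_l\otimes\psi_l\rangle\langle\varphi_l\otimes\psi_l|$ for some vectors $|\varphi_l\rangle\in\mathbb{C}^M$, $|\psi_l\rangle\in\mathbb{C}^N$ (a decomposition into $K$ rank-one product terms). A matrix $X$ is normal if $XX^\dagger=X^\dagger X$. *)

(* Defs.v *)
From HB Require Import structures.
From mathcomp Require Import all_boot all_order all_algebra.
Set Implicit Arguments. Unset Strict Implicit. Unset Printing Implicit Defensive.
Import Order.TTheory GRing.Theory Num.Theory.
Local Open Scope ring_scope.

Section QDefs.
Variable C : numClosedFieldType.

Definition adjmx m n (A : 'M[C]_(m, n)) : 'M[C]_(n, m) := map_mx Num.conj A^T.

(* tensor product of column vectors: (phi (x) psi)_(mxvec_index i j) = phi_i psi_j *)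
Definition tensv M N (phi : 'cV[C]_M) (psi : 'cV[C]_N) : 'cV[C]_(M * N) :=
  (mxvec (phi *m psi^T))^T.

Definition proj1 n (v : 'cV[C]_n) : 'M[C]_n := v *m adjmx v.

Definition is_state n (rho : 'M[C]_n) : Prop :=
  [/\ adjmx rho = rho,
      forall v : 'cV[C]_n, 0 <= (adjmx v *m rho *m v) 0 0
    & \tr rho = 1].

Definition is_decomp n K (rho : 'M[C]_n) (Phi : 'I_K -> 'cV[C]_n) : Prop :=
  rho = \sum_(l < K) proj1 (Phi l).

Definition K_separable M N K (rho : 'M[C]_(M * N)) : Prop :=
  exists (phi : 'I_K -> 'cV[C]_M) (psi : 'I_K -> 'cV[C]_N),
    rho = \sum_(l < K) proj1 (tensv (phi l) (psi l)).

(* the columns of E form an orthonormal basis of C^n *)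
Definition is_onb n (E : 'M[C]_n) : Prop := adjmx E *m E = 1%:M.

Definition gramv M N K (Phi : 'I_K -> 'cV[C]_(M * N)) (E : 'M[C]_M) (F : 'M[C]_N)
  (m : 'I_M) (n : 'I_N) : 'cV[C]_K :=
  \col_(l < K) (adjmx (Phi l) *m tensv (col m E) (col n F)) 0 0.

Definition commuting_normal_cond M N K (Phi : 'I_K -> 'cV[C]_(M * N))
  (E : 'M[C]_M) (F : 'M[C]_N) : Prop :=
  exists Mx : 'I_M -> 'I_M -> 'M[C]_K,
    [/\ forall m k, Mx m k *m adjmx (Mx m k) = adjmx (Mx m k) *m Mx m k,
        forall m k m' k', Mx m k *m Mx m' k' = Mx m' k' *m Mx m k
      & forall m k n, Mx m k *m gramv Phi E F k n = gramv Phi E F m n].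

End QDefs.

(* Main.v *)
Require Import Defs.
From HB Require Import structures.
From mathcomp Require Import all_boot all_order all_algebra.
Set Implicit Arguments. Unset Strict Implicit. Unset Printing Implicit Defensive.
Import Order.TTheory GRing.Theory Num.Theory Num.Def.
Local Open Scope ring_scope.
Local Open Scope sesquilinear_scope.
Section S.
Variable C : numClosedFieldType.

Lemma adjM m n p (A : 'M[C]_(m,n)) (B : 'M[C]_(n,p)) : (A *m B)^t* = B^t* *m A^t*.
Proof. by rewrite trmx_mul map_mxM. Qed.

Lemma trig_normal_diag n (T : 'M[C]_n) :
  is_trig_mx T -> T *m T^t* = T^t* *m T -> is_diag_mx T.
Proof.
move=> /is_trig_mxP Ttr Tn; apply/is_diag_mxP.
suff H : forall k (j : 'I_n), (j < k)%N -> forall i : 'I_n, i != j :> nat -> T i j = 0.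
  move=> i j ij; case: (ltngtP i j) => [lij|lji|eij]; first exact: Ttr.
    by apply: (H j.+1) => //; rewrite ltnSn.
  by rewrite eij eqxx in ij.
elim=> [//|k IH] j; rewrite ltnS leq_eqVlt => /orP[/eqP jk|]; last exact: IH.
have rowj : forall l : 'I_n, l != j -> T j l = 0.
  move=> l lj; case: (ltngtP j l) => [jl|lj'|]; first exact: Ttr.
    by apply: (IH l); [rewrite -jk | rewrite eq_sym].
  by move=> /val_inj ej; rewrite ej eqxx in lj.
have /matrixP /(_ j j) := Tn; rewrite !mxE.
rewrite (bigD1 j) //= big1 ?addr0; last first.
  by move=> l lj; rewrite !mxE rowj // mul0r.
rewrite (bigD1 j) //= !mxE mulrC -[X in X = _]addr0 => /addrI S0.
have : \sum_(i < n | i != j) `|T i j| ^+ 2 = 0.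
  rewrite [RHS]S0; apply: eq_bigr => i _; rewrite !mxE mulrC -normCK //.
move/eqP; rewrite psumr_eq0; last by move=> i _; rewrite exprn_ge0.
move=> /allP Hall i ij.
have : i \in index_enum 'I_n by rewrite mem_index_enum.
move/Hall; rewrite ij /= expf_eq0 /= normr_eq0 => /eqP //.
Qed.
Lemma adjK m n (A : 'M[C]_(m,n)) : A^t* ^t* = A.
Proof. exact: trmxCK. Qed.

Lemma unitary_tK n (U : 'M[C]_n) : U \is unitarymx -> U^t* *m U = 1%:M.
Proof. by move=> Uu; rewrite -[U^t*]mul1mx mulmxKtV. Qed.

Lemma unitary_Kt n (U : 'M[C]_n) : U \is unitarymx -> U *m U^t* = 1%:M.
Proof. by move/unitarymxP. Qed.

Lemma codiag_normal n (As : seq 'M[C]_n) :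
  {in As &, forall A B, comm_mx A B} ->
  {in As, forall A, A *m A^t* = A^t* *m A} ->
  exists2 P : 'M_n, P \is unitarymx &
    {in As, forall A, is_diag_mx (P *m A *m P^t*)}.
Proof.
move=> Hc Hn; have [P Pu /allP HP] := cotrigonalization Hc.
exists P => // A AAs; have := HP A AAs; rewrite /= /similar_to conjymx // => Htr.
apply: trig_normal_diag => //.
have K1 m (X : 'M_(m,n)) : X *m P^t* *m P = X.
  by rewrite -mulmxA unitary_tK // mulmx1.
rewrite !adjM !adjK !mulmxA !K1 -!mulmxA; congr (_ *m _).
by rewrite !mulmxA Hn.
Qed.
Local Notation "B ^!" :=
  (orthomx conjC (mx_of_hermitian (hermitian1mx _)) B) : matrix_set_scope.

Lemma adj0 m n : (0 : 'M[C]_(m,n))^t* = 0.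
Proof. by rewrite trmx0 map_mx0. Qed.

Lemma adjD m n (A B : 'M[C]_(m,n)) : (A + B)^t* = A^t* + B^t*.
Proof. by rewrite linearD /= map_mxD. Qed.

Lemma mulmx_tC_eq0 m n (A : 'M[C]_(m,n)) : A *m A^t* = 0 -> A = 0.
Proof.
move=> H; apply/matrixP => i j; rewrite mxE.
have /matrixP /(_ i i) := H; rewrite !mxE => /eqP.
rewrite psumr_eq0; last by move=> k _; rewrite !mxE mul_conjC_ge0.
move=> /allP /(_ j (mem_index_enum _)) /=; rewrite !mxE mul_conjC_eq0.
by move/eqP.
Qed.

Lemma kerlem n K p (Y Z : 'M[C]_(n,K)) (X : 'M[C]_(p,n)) :
  Y *m Y^t* = Z *m Z^t* -> X *m Y = 0 -> X *m Z = 0.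
Proof.
move=> G XY; apply: mulmx_tC_eq0.
by rewrite adjM !mulmxA -(mulmxA X) -G mulmxA XY !mul0mx.
Qed.

Lemma rank_gram n K (Y Z : 'M[C]_(n,K)) :
  Y *m Y^t* = Z *m Z^t* -> \rank Y = \rank Z.
Proof.
move=> G.
have s1 : (kermx Y <= kermx Z)%MS by apply/sub_kermxP/(kerlem G)/mulmx_ker.
have s2 : (kermx Z <= kermx Y)%MS by apply/sub_kermxP/(kerlem (esym G))/mulmx_ker.
have := mxrankS s1; have := mxrankS s2; rewrite !mxrank_ker => h1 h2.
have e : (n - \rank Y = n - \rank Z)%N by apply/eqP; rewrite eqn_leq h1 h2.
by rewrite -(subKn (rank_leq_row Y)) e subKn // rank_leq_row.
Qed.

Lemma unitary_freedom n K (Y Z : 'M[C]_(n,K)) :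
  Y *m Y^t* = Z *m Z^t* -> exists2 U : 'M_K, U \is unitarymx & Y *m U = Z.
Proof.
move=> G.
have kYZ := kerlem G.
pose R := schmidt (row_base Y); pose W := schmidt (row_base Y^!%MS).
have Ru : R *m R^t* = 1%:M by apply/unitarymxP/schmidt_unitarymx/rank_leq_col.
have compl : R^t* *m R + W^t* *m W = 1%:M.
  have Su := schmidt_complete_unitarymx Y.
  have := mulmxKtV (1%:M : 'M_K) Su (add_rank_ortho Y).
  by rewrite mul1mx /schmidt_complete tr_col_mx map_row_mx mul_row_col.
have orth p (V : 'M[C]_(p, K)) :
    let W0 := schmidt (row_base V^!%MS) in V *m W0^t* = 0 /\ W0 *m W0^t* = 1%:M.
  move=> W0; split; last by apply/unitarymxP/schmidt_unitarymx/rank_leq_col.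
  have : (W0 <= V^!%MS)%MS.
    by rewrite (eqmx_schmidt_free (row_base_free _)) eq_row_base.
  move/sub_kermxP; rewrite mul1mx => h. idtac.
  by have := congr1 (fun X => X^t*) h; rewrite adjM adjK adj0.
have YW : Y *m W^t* = 0 by case: (orth _ Y).
have er : \rank Z^! = \rank Y^!.
  by rewrite !rank_ortho (rank_gram G).
have [W' [ZW' W'u]] : exists W' : 'M_(\rank Y^!, K),
    Z *m W'^t* = 0 /\ W' *m W'^t* = 1%:M.
  by rewrite -er; exists (schmidt (row_base Z^!%MS)); apply: orth.
have YR : Y *m R^t* *m R = Y.
  have YsR : (Y <= R)%MS.
    by rewrite (submx_trans _ (schmidt_sub _)) // eq_row_base.
  have e := mulmxKpV YsR.
  by rewrite -[X in X *m _ *m _ = _]e -(mulmxA _ R (R^t*)) Ru mulmx1 e.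
have RG : R *m pinvmx Y *m Y = R.
  apply: mulmxKpV.
  by rewrite (eqmx_schmidt_free (row_base_free _)) eq_row_base.
have YTZ : Y *m pinvmx Y *m Z = Z.
  apply/eqP; rewrite -subr_eq0 -{2}[Z]mul1mx -mulmxBl; apply/eqP/kYZ.
  by rewrite mulmxBl mul1mx mulmxKpV ?subrr.
set T := pinvmx Y *m Z.
have RT : R *m T = R *m pinvmx Y *m Z by rewrite mulmxA.
have RTT : R *m T *m (R *m T)^t* = 1%:M.
  rewrite RT; set G0 := R *m pinvmx Y.
  rewrite adjM !mulmxA -(mulmxA G0 Z) -G mulmxA -(mulmxA (G0 *m Y)) -adjM.
  by rewrite RG Ru.
exists (R^t* *m R *m T + W^t* *m W').
  apply/unitarymxP.
  have eA : R^t* *m R *m T = R^t* *m (R *m T) by rewrite mulmxA.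
  have AA : R^t* *m R *m T *m (R^t* *m R *m T)^t* = R^t* *m R.
    by rewrite eA adjM adjK mulmxA -(mulmxA (R^t*)) RTT mulmx1.
  have AB : R^t* *m R *m T *m (W^t* *m W')^t* = 0.
    rewrite eA RT adjM adjK !mulmxA -(mulmxA _ Z) ZW' mulmx0 !mul0mx //.
  have BA : W^t* *m W' *m (R^t* *m R *m T)^t* = 0.
    by rewrite -[W^t* *m W']adjK -adjM AB adj0.
  have BB : W^t* *m W' *m (W^t* *m W')^t* = W^t* *m W.
    by rewrite adjM adjK mulmxA -(mulmxA _ W') W'u mulmx1.
  by rewrite adjD mulmxDl !mulmxDr AA AB BA BB addr0 add0r compl.
rewrite mulmxDr (mulmxA Y (R^t* *m R)) (mulmxA Y (R^t*)) YR mulmxA YW mul0mx addr0.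
by rewrite /T mulmxA YTZ.
Qed.
Definition Jm M : 'M[C]_M := const_mx 1.

Lemma JJ M : Jm M *m Jm M = M%:R *: Jm M.
Proof.
apply/matrixP => i j; rewrite !mxE (eq_bigr (fun _ => 1)); last by move=> k _; rewrite !mxE mulr1.
by rewrite sumr_const card_ord mulr1.
Qed.

Lemma Jmul M (a b : C) : (1%:M - a *: Jm M) *m (1%:M - b *: Jm M) =
  1%:M - (a + b - a * b * M%:R) *: Jm M.
Proof.
rewrite mulmxBl !mulmxBr mul1mx mulmx1 -!scalemxAl -!scalemxAr mul1mx JJ !scalerA.
rewrite !scalerDl scaleNr !opprD !opprK !addrA; congr (_ + _).
by rewrite addrAC.
Qed.
Definition cc M : C := (1 + 'i) / M%:R.
Definition F0 M : 'M[C]_M := 1%:M - cc M *: Jm M.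

Lemma cc_eq M : (0 < M)%N -> (cc M)^* + cc M - (cc M)^* * cc M * M%:R = 0.
Proof.
move=> M0; have m0 : M%:R != 0 :> C by rewrite pnatr_eq0 -lt0n.
rewrite /cc rmorphM /= fmorphV /= conjC_nat rmorphD /= conjC1 conjCi.
rewrite -mulrDl mulrA mulfVK // mulrAC -mulrBl.
have -> : (1 - 'i) * (1 + 'i) = 2%:R :> C.
  by rewrite -subr_sqr expr1n sqrCi opprK.
by rewrite addrACA addNr addr0 subrr mul0r.
Qed.

Lemma F0_adj M : (F0 M)^t* = 1%:M - (cc M)^* *: Jm M.
Proof.
apply/matrixP => i j; rewrite !mxE rmorphB /= rmorphM /= conjC1 eq_sym.
by rewrite rmorph_nat.
Qed.

Lemma F0_unitary M : (0 < M)%N -> (F0 M)^t* *m F0 M = 1%:M.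
Proof. by move=> M0; rewrite F0_adj /F0 Jmul cc_eq // scale0r subr0. Qed.

Lemma Im0 : 'Im (0 : C) = 0.
Proof. by rewrite ImE conjC0 subrr mulr0 mul0r. Qed.

Lemma rect_neq0 (a b : C) : a \is Num.real -> b \is Num.real -> b != 0 ->
  a + 'i * b != 0.
Proof.
move=> ar br; apply: contra => /eqP h.
by have := Im_rect ar br; rewrite h Im0 => <-.
Qed.

Lemma F0_neq0 M (j m : 'I_M) : F0 M j m != 0.
Proof.
have M0 : (0 < M)%N by case: M j m => [[]|].
have m0 : M%:R != 0 :> C by rewrite pnatr_eq0 -lt0n.
have -> : F0 M j m = ((j == m)%:R - M%:R^-1) + 'i * (- M%:R^-1).
  rewrite !mxE mulr1 /cc mulrDl mul1r mulrN opprD addrA; congr (_ - _).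
apply: rect_neq0; first by rewrite rpredB ?rpredV ?realn.
  by rewrite rpredN rpredV realn.
by rewrite oppr_eq0 invr_eq0.
Qed.
Lemma Re0 : 'Re (0 : C) = 0.
Proof. by rewrite ReE conjC0 addr0 mul0r. Qed.

Definition wk (k : nat) : C := 1 + 'i * k%:R.
Definition zf (k : nat) : C := 2%:R / wk k - 1.

Lemma wk_neq0 k : wk k != 0.
Proof.
apply: contraTneq isT => h.
have := Re_rect (@realn C 1) (@realn C k); rewrite -/(wk k) h Re0 => /eqP.
by rewrite eq_sym oner_eq0.
Qed.

Lemma zfE k : zf k = (wk k)^* / wk k.
Proof.
rewrite /zf -[X in _ - X](divff (wk_neq0 k)) -mulrBl; congr (_ / _).
rewrite /wk rmorphD /= conjC1 rmorphM /= conjCi conjC_nat mulNr.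
by rewrite opprD addrA -[2%:R]/(1 + 1 : C) addrK.
Qed.

Lemma zf_unit k : (zf k)^* * zf k = 1.
Proof.
rewrite zfE rmorphM /= fmorphV /= conjCK.
have w0 := wk_neq0 k; have w0c : (wk k)^* != 0 by rewrite conjC_eq0.
rewrite mulrA mulfVK // divff //.
Qed.

Lemma zf_inj : injective zf.
Proof.
move=> a b; rewrite /zf => /addIr h.
have two0 : (2%:R : C) != 0 by rewrite pnatr_eq0.
have := mulfI two0 h => /invr_inj /addrI /(mulfI (neq0Ci C)) /eqP.
by rewrite eqr_nat => /eqP.
Qed.

Lemma exists_unit_nonroot (Q : {poly C}) : Q != 0 ->
  exists z : C, z^* * z = 1 /\ ~~ root Q z.
Proof.
move=> Q0; set rs := [seq zf k | k <- iota 0 (size Q)].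
case: (boolP (all (root Q) rs)) => [H|].
  have := max_poly_roots Q0 H; rewrite map_inj_uniq ?iota_uniq //; last exact: zf_inj.
  by rewrite size_map size_iota ltnn => /(_ isT).
by case/allPn => z /mapP [k _ ->] nr; exists (zf k); rewrite zf_unit.
Qed.
Lemma choose_onb M L (v : 'I_L -> 'cV[C]_M) : exists E : 'M[C]_M,
  E^t* *m E = 1%:M /\ forall l (m : 'I_M), (E^t* *m v l) m 0 = 0 -> v l = 0.
Proof.
case: M v => [|M'] v.
  by exists 1%:M; split; [apply/matrixP => [[]]| move=> l [] ].
set M := M'.+1.
pose Pp (p : 'I_L * 'I_M) : {poly C} :=
  \sum_(j < M) (((F0 M j p.2)^* * v p.1 j 0) *: 'X^j).
have Pp0 p : v p.1 != 0 -> Pp p != 0.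
  move=> vn0; have [j vj] : exists j, v p.1 j 0 != 0.
    apply/existsP; apply: contraR vn0; rewrite negb_exists => /forallP h.
    by apply/eqP/matrixP => i k; rewrite ord1 mxE; apply/eqP; rewrite -[_ == _]negbK h.
  apply/negP => /eqP H; have := congr1 (fun q : {poly C} => q`_j) H; rewrite /= coef_sum coef0.
  rewrite (bigD1 j) //= big1 ?addr0; last first.
    move=> i ij; rewrite coefZ coefXn (_ : (j == i :> nat) = false) ?mulr0 //.
    by apply/negbTE; rewrite eq_sym.
  rewrite coefZ coefXn eqxx mulr1 => /eqP; apply/negP.
  by rewrite mulf_neq0 // conjC_eq0 F0_neq0.
pose Q := \prod_(p | v p.1 != 0) Pp p.
have Q0 : Q != 0 by apply/prodf_neq0 => p; apply: Pp0.
have [z [zu nr]] := exists_unit_nonroot Q0.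
have Ppz p : v p.1 != 0 -> (Pp p).[z] != 0.
  move: nr; rewrite /root /Q horner_prod prodf_seq_neq0 => /allP h vn0.
  by have := h p (mem_index_enum _); rewrite vn0.
pose D : 'M[C]_M := diag_mx (\row_j (z^*) ^+ j).
exists (D *m F0 M); split.
  have DD : D^t* *m D = 1%:M.
    rewrite /D tr_diag_mx map_diag_mx mulmx_diag -diag_const_mx; congr diag_mx.
    apply/rowP => j; rewrite !mxE rmorphXn /= conjCK -exprMn.
    by rewrite mulrC zu expr1n.
  by rewrite adjM -mulmxA (mulmxA (D^t*)) DD mul1mx F0_unitary.
move=> l m h; apply/eqP; apply: contraLR isT => vn0.
have := Ppz (l, m) vn0; apply: contraNN => _; apply/eqP; rewrite -[RHS]h.
rewrite horner_sum !mxE; apply: eq_bigr => j _.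
rewrite hornerZ hornerXn /D mul_diag_mx !mxE rmorphM rmorphXn /= conjCK.
by rewrite mulrC mulrA.
Qed.
Definition Am d K (Phi : 'I_K -> 'cV[C]_d) : 'M[C]_(d, K) := \matrix_(i, l) Phi l i 0.

Lemma decomp_mat d K (Phi : 'I_K -> 'cV[C]_d) :
  \sum_(l < K) proj1 (Phi l) = Am Phi *m (Am Phi)^t*.
Proof.
apply/matrixP => i j; rewrite summxE !mxE; apply: eq_bigr => l _.
by rewrite !mxE big_ord1 !mxE.
Qed.

Lemma col_Am d K (Phi : 'I_K -> 'cV[C]_d) l : col l (Am Phi) = Phi l.
Proof. by apply/matrixP => i j; rewrite ord1 !mxE. Qed.

Lemma Am_col d K (B : 'M[C]_(d, K)) : Am (fun l => col l B) = B.
Proof. by apply/matrixP => i j; rewrite !mxE. Qed.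

Lemma gramvE M N K (Phi : 'I_K -> 'cV[C]_(M * N)) E F m n :
  gramv Phi E F m n = (Am Phi)^t* *m tensv (col m E) (col n F).
Proof.
apply/matrixP => l j; rewrite ord1 !mxE; apply: eq_bigr => i _.
by rewrite !mxE.
Qed.

Lemma tensvE M N (a : 'cV[C]_M) (b : 'cV[C]_N) i j :
  tensv a b (mxvec_index i j) 0 = a i 0 * b j 0.
Proof. by rewrite /tensv mxE mxvecE mxE big_ord1 mxE. Qed.

Lemma sum_mxvec M N (f : 'I_(M * N) -> C) :
  \sum_(k < M * N) f k = \sum_(i < M) \sum_(j < N) f (mxvec_index i j).
Proof.
rewrite (reindex _ (curry_mxvec_bij M N)) /=.
by rewrite pair_big /=; apply: eq_bigr => -[i j].
Qed.

Lemma adj_entry m n (A : 'M[C]_(m, n)) i j : (A^t*) i j = (A j i)^*.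
Proof. by rewrite !mxE. Qed.

Lemma dot_conj n (a b : 'cV[C]_n) : ((a^t* *m b) 0 0)^* = (b^t* *m a) 0 0.
Proof.
rewrite !mxE rmorph_sum; apply: eq_bigr => i _.
by rewrite !mxE rmorphM /= conjCK mulrC.
Qed.

Lemma dot_tens M N (a c : 'cV[C]_M) (b d : 'cV[C]_N) :
  ((tensv a b)^t* *m tensv c d) 0 0 = (a^t* *m c) 0 0 * (b^t* *m d) 0 0.
Proof.
rewrite mxE sum_mxvec !mxE big_distrl /=; apply: eq_bigr => i _.
rewrite big_distrr /=; apply: eq_bigr => j _.
rewrite !adj_entry !tensvE rmorphM /=.
by rewrite mulrACA.
Qed.
Lemma sum_delta n (g : 'I_n -> C) i : \sum_k (1%:M : 'M[C]_n) i k * g k = g i.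
Proof.
have := congr1 (fun A : 'M[C]_(n,1) => A i 0) (mul1mx (\col_k g k)); rewrite !mxE => <-.
apply: eq_bigr => k _. by rewrite [(\col__ _) _ _]mxE.
Qed.

Lemma tens_complete M N (E : 'M[C]_M) (F : 'M[C]_N) (u : 'cV[C]_(M * N)) :
  E *m E^t* = 1%:M -> F *m F^t* = 1%:M ->
  (forall m n, ((tensv (col m E) (col n F))^t* *m u) 0 0 = 0) -> u = 0.
Proof.
move=> EE FF H; apply/matrixP => a b; rewrite ord1 mxE.
case/mxvec_indexP: a => i j.
have e : u (mxvec_index i j) 0 = \sum_m \sum_n E i m * F j n *
    ((tensv (col m E) (col n F))^t* *m u) 0 0.
  rewrite -(sum_delta (fun i' => u (mxvec_index i' j) 0)).
  under eq_bigr do rewrite -(sum_delta (fun j' => u (mxvec_index _ j') 0)).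
  rewrite -{1}EE -FF.
  pose f (i0 : 'I_M) (k : 'I_N) (m : 'I_M) (n : 'I_N) :=
    E i m * (E i0 m)^* * (F j n * (F k n)^*) * u (mxvec_index i0 k) 0.
  transitivity (\sum_i0 \sum_k \sum_m \sum_n f i0 k m n).
    apply: eq_bigr => i0 _; rewrite mxE big_distrl /=.
    under eq_bigr do rewrite big_distrr /=.
    rewrite exchange_big /=; apply: eq_bigr => k _.
    apply: eq_bigr => m _.
    rewrite [(F *m _) j k]mxE big_distrl /= big_distrr /=; apply: eq_bigr => n _.
    by rewrite /f !adj_entry mulrA.
  transitivity (\sum_m \sum_n \sum_i0 \sum_k f i0 k m n).
    under eq_bigr do rewrite exchange_big /=.
    under eq_bigr do under eq_bigr do rewrite exchange_big /=.
    rewrite exchange_big /=.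
    by under eq_bigr do rewrite exchange_big /=.
  apply: eq_bigr => m _; apply: eq_bigr => n _.
  rewrite mxE sum_mxvec big_distrr /=; apply: eq_bigr => i0 _.
  rewrite big_distrr /=; apply: eq_bigr => k _.
  rewrite adj_entry tensvE !mxE rmorphM /f.
  by rewrite mulrACA -!mulrA.
by rewrite e big1 // => m _; rewrite big1 // => n _; rewrite H mulr0.
Qed.
Lemma uconjM K (U A B : 'M[C]_K) : U *m U^t* = 1%:M ->
  (U^t* *m A *m U) *m (U^t* *m B *m U) = U^t* *m (A *m B) *m U.
Proof. by move=> UU; rewrite -!mulmxA (mulmxA U) UU mul1mx. Qed.

Lemma uconjM' K (U A B : 'M[C]_K) : U *m U^t* = 1%:M ->
  U^t* *m A *m U *m U^t* *m B *m U = U^t* *m (A *m B) *m U.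
Proof. by move=> UU; rewrite -uconjM // !mulmxA. Qed.

Lemma diag_adj K (d : 'rV[C]_K) : (diag_mx d)^t* = diag_mx (map_mx conjC d).
Proof. by rewrite tr_diag_mx map_diag_mx. Qed.

Lemma diag_comm K (d e : 'rV[C]_K) : diag_mx d *m diag_mx e = diag_mx e *m diag_mx d.
Proof. by rewrite !mulmx_diag; congr diag_mx; apply/rowP => l; rewrite !mxE mulrC. Qed.

Lemma adj_col_entry M K (E : 'M[C]_(M, K)) (v : 'cV[C]_M) (k : 'I_K) :
  (E^t* *m v) k 0 = ((col k E)^t* *m v) 0 0.
Proof. by rewrite !mxE; apply: eq_bigr => i _; rewrite !mxE. Qed.

Lemma a_to_b M N K (rho : 'M[C]_(M * N)) (F : 'M[C]_N) :
  K_separable K rho -> exists E : 'M[C]_M, is_onb E /\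
    forall Phi : 'I_K -> 'cV[C]_(M * N), is_decomp rho Phi ->
      commuting_normal_cond Phi E F.
Proof.
case=> phi [psi Hr].
have [E [EE Enz]] := choose_onb phi.
exists E; split; first exact EE.
move=> Phi HPhi.
pose Psi l := tensv (phi l) (psi l).
have G : Am Psi *m (Am Psi)^t* = Am Phi *m (Am Phi)^t*.
  by rewrite -!decomp_mat -Hr -HPhi.
have [U Uu AU] := unitary_freedom G.
have UU : U *m U^t* = 1%:M by apply/unitarymxP.
pose a l m := ((phi l)^t* *m col m E) 0 0.
pose b l n := ((psi l)^t* *m col n F) 0 0.
have wPsi m n : gramv Psi E F m n = \col_l (a l m * b l n).
  by rewrite /gramv; apply/colP => l; rewrite [LHS]mxE [RHS]mxE; exact: dot_tens.
have wPhi m n : gramv Phi E F m n = U^t* *m gramv Psi E F m n.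
  by rewrite !gramvE -AU adjM mulmxA.
have a0 l k : a l k = 0 -> forall m, a l m = 0.
  move=> h m; have : (E^t* *m phi l) k 0 = 0.
    by rewrite adj_col_entry -dot_conj -/(a l k) h conjC0.
  by move/Enz => p0; rewrite /a p0 adj0 mul0mx mxE.
pose D m k : 'M[C]_K := diag_mx (\row_l (if a l k == 0 then 1 else a l m / a l k)).
exists (fun m k => U^t* *m D m k *m U); split; rewrite /adjmx.
- move=> m k; rewrite !adjM adjK !mulmxA !uconjM' //.
  by rewrite diag_adj diag_comm.
- by move=> m k m' k'; rewrite !uconjM // diag_comm.
move=> m k n; rewrite !wPhi !wPsi -!mulmxA (mulmxA U) UU mul1mx; congr (_ *m _).
rewrite /D mul_diag_mx; apply/colP => l; rewrite !mxE.
case: eqP => [h|h]; first by rewrite h (a0 _ _ h m) !mul0r mulr0.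
by rewrite mulrA mulfVK //; apply/eqP.
Qed.

Lemma col_onb M (E : 'M[C]_M) (c : 'cV[C]_M) m :
  E^t* *m E = 1%:M -> ((col m E)^t* *m (E *m c)) 0 0 = c m 0.
Proof. by move=> EE; rewrite -adj_col_entry mulmxA EE mul1mx. Qed.

Lemma sub_entry (X Y : 'M[C]_1) : (X - Y) 0 0 = X 0 0 - Y 0 0.
Proof. by rewrite !mxE. Qed.

Lemma c_to_a M N K (rho : 'M[C]_(M * N)) (F : 'M[C]_N) :
  (0 < M)%N -> is_onb F ->
  (exists (E : 'M[C]_M) (Phi : 'I_K -> 'cV[C]_(M * N)),
       [/\ is_onb E, is_decomp rho Phi & commuting_normal_cond Phi E F]) ->
  K_separable K rho.
Proof.
move=> M0 FF [E [Phi [EE HPhi [Mx [Hn Hc Hw]]]]].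
rewrite /is_onb /adjmx in EE FF.
have EE' : E *m E^t* = 1%:M by apply: mulmx1C.
have FF' : F *m F^t* = 1%:M by apply: mulmx1C.
pose As := [seq Mx p.1 p.2 | p <- enum [set: 'I_M * 'I_M]].
have memAs A : A \in As -> exists m k, A = Mx m k.
  by case/mapP => p _ ->; exists p.1, p.2.
have [P Pu Pd] : exists2 P : 'M[C]_K, P \is unitarymx &
    {in As, forall A, is_diag_mx (P *m A *m P^t*)}.
  apply: codiag_normal.
    by move=> A B /memAs [m [k ->]] /memAs [m' [k' ->]]; apply: Hc.
  by move=> A /memAs [m [k ->]]; apply: Hn.
have Pd' m k : is_diag_mx (P *m Mx m k *m P^t*).
  by apply: Pd; apply/mapP; exists (m, k); rewrite ?mem_enum ?inE.
have PtP := unitary_tK Pu.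
pose B := Am Phi *m P^t*.
pose w m n := (B^t* *m tensv (col m E) (col n F)).
have wE m n : w m n = P *m gramv Phi E F m n.
  by rewrite /w gramvE /B adjM adjK mulmxA.
pose Dg m k := P *m Mx m k *m P^t*.
have Dw m k n : Dg m k *m w k n = w m n.
  by rewrite !wE /Dg -!mulmxA (mulmxA (P^t*)) PtP mul1mx Hw.
have Dw' l m k n : Dg m k l l * w k n l 0 = w m n l 0.
  rewrite -(Dw m k n) [RHS]mxE (bigD1 l) //= big1 ?addr0 // => j jl.
  by have /is_diag_mxP -> := Pd' m k; rewrite ?mul0r // eq_sym.
pose m0 := Ordinal M0.
exists (fun l => E *m \col_m ((Dg m m0 l l)^* )),
       (fun l => F *m \col_n ((w m0 n l 0)^* )).
have Hrho : rho = B *m B^t*.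
  by rewrite HPhi decomp_mat /B adjM adjK mulmxA -(mulmxA _ (P^t*)) PtP mulmx1.
rewrite Hrho -[in LHS](Am_col B) -decomp_mat; apply: eq_bigr => l _; congr proj1.
apply/eqP; rewrite -subr_eq0; apply/eqP/(tens_complete EE' FF') => m n.
rewrite mulmxBr sub_entry dot_tens !col_onb // [(\col__ _) m 0]mxE [(\col__ _) n 0]mxE.
rewrite -rmorphM /= Dw' -dot_conj -adj_col_entry.
by rewrite subrr.
Qed.
End S.
Close Scope sesquilinear_scope.
Unset Implicit Arguments.

Theorem theorem3 (C : numClosedFieldType) (M N K : nat)
  (rho : 'M[C]_(M * N)) (F : 'M[C]_N) :
  is_state rho -> is_onb F -> (0 < K)%N ->
  (exists Phi : 'I_K -> 'cV[C]_(M * N), is_decomp rho Phi) ->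
  (K_separable K rho <->
     exists E : 'M[C]_M, is_onb E /\
       forall Phi : 'I_K -> 'cV[C]_(M * N), is_decomp rho Phi ->
         commuting_normal_cond Phi E F)
  /\
  ((exists E : 'M[C]_M, is_onb E /\
       forall Phi : 'I_K -> 'cV[C]_(M * N), is_decomp rho Phi ->
         commuting_normal_cond Phi E F) <->
   (exists (E : 'M[C]_M) (Phi : 'I_K -> 'cV[C]_(M * N)),
       [/\ is_onb E, is_decomp rho Phi & commuting_normal_cond Phi E F])).
Proof.
move=> Hst HF K0 [Phi0 HPhi0].
have M0 : (0 < M)%N.
  case: M rho Hst Phi0 HPhi0 => // rho [_ _].
  by rewrite /mxtrace big_ord0 => /eqP; rewrite eq_sym oner_eq0.
have bc : (exists E : 'M[C]_M, is_onb E /\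
       forall Phi : 'I_K -> 'cV[C]_(M * N), is_decomp rho Phi ->
         commuting_normal_cond Phi E F) ->
   (exists (E : 'M[C]_M) (Phi : 'I_K -> 'cV[C]_(M * N)),
       [/\ is_onb E, is_decomp rho Phi & commuting_normal_cond Phi E F]).
  by move=> [E [EE H]]; exists E, Phi0; split => //; apply: H.
split; split.
- exact: a_to_b.
- by move=> hb; apply: (c_to_a M0 HF); apply: bc.
- exact: bc.
- by move=> hc; apply: a_to_b; apply: (c_to_a M0 HF hc).
Qed.
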